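(* Let $G=([k],E)$ be a graph and let $(P_1,\dots,P_k)$ be a $k$-tuple of finite sets in $\mathbb{R}^d$ that is compatible with $G$ and has profile $\boldsymbol\lambda$. If some vertex $i\in[k]$ has degree in $G$ strictly larger than $d-\lambda_i$, then there is no $k$-tuple $(p_1,\dots,p_k)$ with $p_j\in P_j$ for all $j$ whose points are pairwise at distance $1$; that is, $\psi_{k,d}(P_1,\dots,P_k)=0$.
   Context: A sphere of dimension $\ell$ in $\mathbb{R}^d$ ($0\le\ell\le d-1$) is the set of points of an $(\ell+1)$-dimensional affine subspace at a fixed positive distance from a fixed point of that subspace. For finite sets $P_1,\dots,P_k\subset\mathbb{R}^d$, the profile of $(P_1,\dots,P_k)$ is $\boldsymbol\lambda=(\lambda_1,\dots,\lambda_k)$, where $\lambda_i=0$ if $|P_i|\le 3$, and otherwise $\lambda_i$ is the smallest $\ell$ such that some sphere of dimension $\ell$ contains $P_i$, with $\lambda_i=d$ if no sphere contains $P_i$. A graph $G=([k],E)$ is compatible with $(P_1,\dots,P_k)$ if $\|p-p'\|=1$ for every edge $\{i,j\}\in E$ and all $p\in P_i$, $p'\in P_j$. $\psi_{k,d}(P_1,\dots,P_k)$ is the number of $k$-tuples $(p_1,\dots,p_k)$ with $p_i\in P_i$ whose points are pairwise at distance $1$. *)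

(* Defs.v *)
From HB Require Import structures.
From mathcomp Require Import all_boot all_order all_algebra.
From mathcomp Require Import finmap.
From mathcomp Require Import reals.
Set Implicit Arguments. Unset Strict Implicit. Unset Printing Implicit Defensive.
Import Order.TTheory GRing.Theory Num.Theory.
Local Open Scope ring_scope.
Local Open Scope fset_scope.

Section Defs.
Variables (R : realType) (d : nat).

Definition edist (x y : 'rV[R]_d) : R :=
  Num.sqrt (\sum_(j < d) (x 0 j - y 0 j) ^+ 2).

Definition on_sphere (c : 'rV[R]_d) (V : 'M[R]_d) (r : R) (x : 'rV[R]_d) : Prop :=
  (x - c <= V)%MS /\ edist x c = r.

(* Some sphere of dimension l (i.e. inside an (l+1)-dimensional affine
   subspace, positive radius, centre in the subspace) contains every point of P. *)
Definition on_sphere_of_dim (P : {fset 'rV[R]_d}) (l : nat) : Prop :=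
  exists (c : 'rV[R]_d) (V : 'M[R]_d) (r : R),
    [/\ \rank V = l.+1, 0 < r & forall p, p \in P -> on_sphere c V r p].

Definition is_profile_entry (P : {fset 'rV[R]_d}) (lam : nat) : Prop :=
  if (#|` P| <= 3)%N then lam = 0%N
  else ((lam < d)%N /\ on_sphere_of_dim P lam /\
          forall l, (l < lam)%N -> ~ on_sphere_of_dim P l)
       \/ (lam = d /\ forall l, (l < d)%N -> ~ on_sphere_of_dim P l).

Definition is_profile (k : nat) (P : 'I_k -> {fset 'rV[R]_d})
    (lam : 'I_k -> nat) : Prop :=
  forall i, is_profile_entry (P i) (lam i).

Definition simple_graph (k : nat) (G : rel 'I_k) : Prop :=
  symmetric G /\ irreflexive G.

Definition degree (k : nat) (G : rel 'I_k) (i : 'I_k) : nat :=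
  #|[set j | G i j]|.

Definition compatible (k : nat) (G : rel 'I_k) (P : 'I_k -> {fset 'rV[R]_d}) : Prop :=
  forall i j, G i j -> forall p q, p \in P i -> q \in P j -> edist p q = 1.

(* psi_{k,d}: number of k-tuples (p_1,...,p_k), p_i in P_i, pairwise at
   distance 1. A k-tuple is represented as a finite function from 'I_k to the
   finite set  U := union of the P_i  (every such tuple takes values in U). *)
Definition psi (k : nat) (P : 'I_k -> {fset 'rV[R]_d}) : nat :=
  let U := (\bigcup_(i <- enum 'I_k) P i)%fset in
  #|[set f : {ffun 'I_k -> U} |
      [forall i, val (f i) \in P i] &&
      [forall i, forall j, (i != j) ==> (edist (val (f i)) (val (f j)) == 1)]]|.

End Defs.

(* Main.v *)
Require Import Defs.
From HB Require Import structures.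
From mathcomp Require Import all_boot all_order all_algebra.
From mathcomp Require Import finmap.
From mathcomp Require Import reals.
From mathcomp Require Import ring lra zify.
Import Order.TTheory GRing.Theory Num.Theory.
Set Implicit Arguments. Unset Strict Implicit. Unset Printing Implicit Defensive.
Local Open Scope ring_scope.

Section Helpers.
Variables (R : realType) (d : nat).
Implicit Types x y z : 'rV[R]_d.

Definition nsq x y : R := \sum_(j < d) (x 0 j - y 0 j) ^+ 2.
Definition dot x y : R := (x *m y^T) 0 0.

Lemma dotE x y : dot x y = \sum_(j < d) x 0 j * y 0 j.
Proof. by rewrite /dot mxE; apply: eq_bigr => j _; rewrite mxE. Qed.

Lemma nsq_ge0 x y : 0 <= nsq x y.
Proof. by apply: sumr_ge0 => j _; rewrite sqr_ge0. Qed.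

Lemma edist1 x y : edist x y = 1 -> nsq x y = 1.
Proof.
move=> h; rewrite /edist -/(nsq x y) in h.
by have := sqr_sqrtr (nsq_ge0 x y); rewrite h expr1n.
Qed.

Lemma nsqxx x : nsq x x = 0.
Proof. by rewrite /nsq big1 // => j _; rewrite subrr expr0n. Qed.

Lemma polar x y z : dot (x - z) (y - z) = (nsq x z + nsq y z - nsq x y) / 2.
Proof.
rewrite dotE /nsq -big_split -sumrB /= mulr_suml.
apply: eq_bigr => j _; rewrite !mxE; by field.
Qed.

Lemma nsq_eq x y : nsq x y = nsq y x.
Proof. by apply: eq_bigr => j _; rewrite -sqrrN opprB. Qed.

Lemma nsq_eq0 x y : nsq x y = 0 -> x = y.
Proof.
move=> h; apply/rowP => j.
have := @psumr_eq0P _ _ _ _ (fun j _ => sqr_ge0 (x 0 j - y 0 j)) h j isT.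
by move/eqP; rewrite sqrf_eq0 subr_eq0 => /eqP.
Qed.

End Helpers.

Lemma gram_unit (R : realType) n (Gm : 'M[R]_n) :
  (forall a b, Gm a b = (1 + (a == b)%:R) / 2) -> Gm \in unitmx.
Proof.
move=> hG; rewrite -row_free_unit -kermx_eq0; apply/eqP.
have key : forall y : 'rV[R]_n, y *m Gm = 0 -> y = 0.
  move=> y hy.
  have hk : forall k, y 0 k = - \sum_(a < n) y 0 a.
    move=> k; have := congr1 (fun M : 'rV[R]_n => M 0 k) hy; rewrite !mxE.
    have e1 : \sum_(a < n) y 0 a * Gm a k = y 0 k + (\sum_(a < n | a != k) y 0 a) / 2.
      rewrite (bigD1 k) //= hG eqxx /=; congr (_ + _); first by field.
      rewrite mulr_suml; apply: eq_bigr => a /negbTE ha; by rewrite hG ha /=; field.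
    have e2 : \sum_(a < n) y 0 a = y 0 k + \sum_(a < n | a != k) y 0 a by rewrite (bigD1 k).
    rewrite e1 e2 => h; lra.
  have hs : \sum_(a < n) y 0 a = 0.
    have e : \sum_(a < n) y 0 a = \sum_(a < n) (- \sum_(b < n) y 0 b).
      by apply: eq_bigr => a _; rewrite hk.
    move: e; rewrite sumr_const card_ord => e.
    have : (\sum_(a < n) y 0 a) *+ n.+1 == 0.
      by rewrite mulrSr {2}e mulNrn subrr.
    by rewrite mulrn_eq0 /= => /eqP.
  by apply/rowP => k; rewrite hk hs oppr0 mxE.
apply/row_matrixP => r; rewrite row0; apply: key.
by rewrite -row_mul mulmx_ker row0.
Qed.

Lemma nsq_via (R : realType) d (x y z : 'rV[R]_d) :
  nsq x y = nsq x z + nsq y z - 2 * dot (x - z) (y - z).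
Proof. by rewrite polar; field. Qed.

Lemma gram_entry (R : realType) n d (M : 'M[R]_(n, d)) a b :
  (M *m M^T) a b = dot (row a M) (row b M).
Proof. by rewrite dotE !mxE; apply: eq_bigr => j _; rewrite !mxE. Qed.

Lemma mulT_entry (R : realType) n d (x : 'rV[R]_d) (M : 'M[R]_(n, d)) b :
  (x *m M^T) 0 b = dot x (row b M).
Proof. by rewrite dotE !mxE; apply: eq_bigr => j _; rewrite !mxE. Qed.

Local Open Scope fset_scope.

Theorem lemma11p5 (R : realType) (d k : nat) (G : rel 'I_k)
    (P : 'I_k -> {fset 'rV[R]_d}) (lam : 'I_k -> nat) :
  simple_graph G ->
  compatible G P ->
  is_profile P lam ->
  (exists i : 'I_k, (d - lam i < degree G i)%N) ->
  psi P = 0%N.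
Proof.
move=> [Gsym Girr] Hcomp Hprof [i Hi].
apply/eqP; rewrite cards_eq0; apply/eqP/setP => f; rewrite !inE.
apply/negbTE/negP => /andP[/forallP hP /forallP hD].
pose q (j : 'I_k) : 'rV[R]_d := val (f j).
have hq : forall a b, a != b -> nsq (q a) (q b) = 1.
  by move=> a b ab; apply: edist1; move: (hD a) => /forallP/(_ b)/implyP/(_ ab)/eqP.
have hc : forall j, G i j -> forall x, x \in P i -> nsq x (q j) = 1.
  by move=> j hij x hx; apply: edist1; apply: (Hcomp i j hij x (q j) hx (hP j)).
pose S := [set j | G i j].
have /card_gt0P [j0 j0S] : (0 < #|S|)%N by apply: leq_ltn_trans (leq0n _) Hi.
pose S' := S :\ j0.
have hcard : #|S| = (#|S'|).+1 by rewrite (cardsD1 j0 S) j0S.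
pose m := #|S'|.
pose nb (a : 'I_m) : 'I_k := enum_val a.
have nbS : forall a, nb a \in S' := fun a => enum_valP a.
have nbj0 : forall a, nb a != j0 by move=> a; have := nbS a; rewrite in_setD1 => /andP[].
have nbG : forall a, G i (nb a) by move=> a; have := nbS a; rewrite in_setD1 inE => /andP[].
have nbi : forall a, nb a != i by move=> a; apply/eqP => e; have := nbG a; rewrite e Girr.
have j0G : G i j0 by rewrite inE in j0S.
have j0i : i != j0 by apply/eqP => e; move: j0G; rewrite -e Girr.
have nbinj : forall a b, (nb a == nb b) = (a == b) by move=> a b; rewrite (inj_eq enum_val_inj).
have gr : forall y z, y != j0 -> z != j0 ->
    dot (q y - q j0) (q z - q j0) = (1 + (y == z)%:R) / 2.
  move=> y z hy hz; rewrite polar (hq _ _ hy) (hq _ _ hz).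
  by have [->|yz] := eqVneq y z; [rewrite nsqxx | rewrite hq //] => /=; field.
pose idx (a : 'I_m.+1) : 'I_k := if unlift ord_max a is Some a' then nb a' else i.
have idx_ne : forall a, idx a != j0.
  by move=> a; rewrite /idx; case: (unlift _ _) => [a'|] //.
have idx_inj : forall a b, (idx a == idx b) = (a == b).
  move=> a b; rewrite /idx.
  case: (unliftP ord_max a) => [a'|] ->; case: (unliftP ord_max b) => [b'|] -> /=.
  - by rewrite nbinj (inj_eq (@lift_inj _ ord_max)).
  - by rewrite (negbTE (nbi a')) eq_sym (negbTE (neq_lift _ _)).
  - by rewrite eq_sym (negbTE (nbi b')) (negbTE (neq_lift _ _)).
  - by rewrite !eqxx.
pose Mf : 'M[R]_(m.+1, d) := \matrix_(a < m.+1) (q (idx a) - q j0).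
pose Wmat : 'M[R]_(m, d) := \matrix_(a < m) (q (nb a) - q j0).
have hGf : Mf *m Mf^T \in unitmx.
  by apply: gram_unit => a b; rewrite gram_entry !rowK gr ?idx_ne // idx_inj.
have hGw : Wmat *m Wmat^T \in unitmx.
  by apply: gram_unit => a b; rewrite gram_entry !rowK gr ?nbj0 // nbinj.
have rkf : \rank Mf = m.+1.
  apply/eqP; rewrite eqn_leq rank_leq_row /=.
  by rewrite -{1}(mxrank_unit hGf) mxrankM_maxl.
have rkw : \rank Wmat = m.
  apply/eqP; rewrite eqn_leq rank_leq_row /=.
  by rewrite -{1}(mxrank_unit hGw) mxrankM_maxl.
have hmd : (m.+1 <= d)%N by rewrite -rkf rank_leq_col.
have HiS : (d - lam i < m.+1)%N by rewrite -hcard; exact: Hi.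
pose u := q i - q j0.
have hx0 : forall x, x \in P i -> forall b, ((x - q j0) *m Wmat^T) 0 b = 1 / 2.
  move=> x hx b; rewrite mulT_entry rowK polar (hc j0 j0G x hx) (hq _ _ (nbj0 b)).
  by rewrite (hc _ (nbG b) x hx); field.
have hx : forall x, x \in P i -> (x - q j0) *m Wmat^T = u *m Wmat^T.
  by move=> x xP; apply/rowP => b; rewrite hx0 // hx0 // hP.
pose a0 := u *m Wmat^T *m invmx (Wmat *m Wmat^T).
pose c := (q j0 + a0 *m Wmat)%R.
pose V := kermx Wmat^T.
have hcq : c - q j0 = a0 *m Wmat by rewrite /c addrC addKr.
have hperp : forall x, x \in P i -> (x - c <= V)%MS.
  move=> x xP; rewrite sub_kermx.
  have -> : x - c = (x - q j0) - a0 *m Wmat by rewrite -hcq opprB addrA subrK.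
  rewrite mulmxBl hx // /a0 -[_ *m Wmat *m Wmat^T]mulmxA mulmxKV //.
  by rewrite subrr.
have hdot : forall x, x \in P i ->
    dot (x - q j0) (c - q j0) = (u *m Wmat^T *m a0^T) 0 0.
  by move=> x xP; rewrite /dot hcq trmx_mul mulmxA hx.
have hrad : forall x, x \in P i -> nsq x c = nsq (q i) c.
  move=> x xP; rewrite (nsq_via x c (q j0)) (nsq_via (q i) c (q j0)).
  by rewrite (hc j0 j0G x xP) (hc j0 j0G (q i) (hP i)) hdot // hdot // hP.
have hsub : ~~ (u <= Wmat)%MS.
  apply/negP => uW.
  have : (Mf <= Wmat)%MS.
    apply/row_subP => a; rewrite rowK /idx.
    case: (unlift _ _) => [a'|] //.
    by rewrite -(rowK (fun a => q (nb a) - q j0) a') row_sub.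
  by move/mxrankS; rewrite rkf rkw ltnn.
have rpos : 0 < edist (q i) c.
  rewrite /edist -/(nsq (q i) c) sqrtr_gt0 lt_def nsq_ge0 andbT.
  apply/eqP => /nsq_eq0 e; apply: (negP hsub).
  by rewrite /u e hcq submxMl.
have sph : on_sphere_of_dim (P i) (d - m.+1).
  exists c, V, (edist (q i) c); split => //.
    by rewrite mxrank_ker mxrank_tr rkw; lia.
  move=> x xP; split; first exact: hperp.
  by rewrite /edist -/(nsq x c) -/(nsq (q i) c) hrad.
move: (Hprof i); rewrite /is_profile_entry; case: ifP => _.
  by move=> h0; rewrite h0 in HiS; lia.
case=> [[hl [_ hmin]] | [hl hmin]].
  have hl' : (d - m.+1 < lam i)%N by lia.
  exact: hmin _ hl' sph.
have hl' : (d - m.+1 < d)%N by lia.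
exact: hmin _ hl' sph.
Qed.
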